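(* In the setting of the flag $\mathcal{F}=(\mathcal{F}_1,\dots,\mathcal{F}_r)$, $r\ge2$, with $\mathcal{F}_i=\bigoplus_{j=0}^{s_i-1}\mathbb{F}_{q^m}\alpha^{lj}$ and $1\le s_1<\dots<s_r<s=n/m$, assume $L=s$. Then: (1) $\mathcal{F}$ is a generalized Galois flag (so $\mathrm{Orb}(\mathcal{F})$ is a generalized Galois flag code) if and only if $s_1=1$. (2) If $r=2$, $s_1=1$ and $s_2=L-1$, then $\mathrm{Orb}(\mathcal{F})$ is an optimum distance generalized Galois flag code of type $(m,n-m)$ (distance $4m$) with cardinality $\frac{q^n-1}{q^m-1}$, the largest possible for cyclic orbit flag codes with best friend $\mathbb{F}_{q^m}$.
   Context: $q$ prime power; $m$ divides $n$; $\alpha$ is a primitive element of $\mathbb{F}_{q^n}$; $l$ is an integer with $1\le l<\frac{q^n-1}{q^m-1}$; $L$ is the degree of the minimal polynomial of $\alpha^l$ over $\mathbb{F}_{q^m}$. Subspaces are $\mathbb{F}_q$-subspaces of $\mathbb{F}_{q^n}$; a flag is a chain $\{0\}\subsetneq\mathcal{F}_1\subsetneq\cdots\subsetneq\mathcal{F}_r\subsetneq\mathbb{F}_{q^n}$ with type its vector of dimensions. $d_S(\mathcal{U},\mathcal{V})=\dim(\mathcal{U}+\mathcal{V})-\dim(\mathcal{U}\cap\mathcal{V})$, $d_f(\mathcal{F},\mathcal{F}')=\sum_i d_S(\mathcal{F}_i,\mathcal{F}'_i)$, $\mathrm{Orb}(\mathcal{F})=\{\mathcal{F}\alpha^j:j\ge0\}$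 with $\mathcal{F}\alpha^j=(\mathcal{F}_1\alpha^j,\dots)$, and the minimum distance of a code is the minimum $d_f$ between distinct codewords. A flag code of type $(t_1,\dots,t_r)$ is an optimum distance flag code if its minimum distance equals $2(\sum_{t_i\le\lfloor n/2\rfloor}t_i+\sum_{t_i>\lfloor n/2\rfloor}(n-t_i))$. A generalized Galois flag is a flag having at least one subspace that is a subfield of $\mathbb{F}_{q^n}$ and at least one subspace that is not a subfield, such that its subspaces that are subfields form a chain of subfields (a Galois subflag). *)

(* Defs.v *)
From HB Require Import structures.
From mathcomp Require Import all_boot all_order all_algebra all_field.
Set Implicit Arguments. Unset Strict Implicit. Unset Printing Implicit Defensive.
Import GRing.Theory.
Local Open Scope ring_scope.

(* Setting: K is the finite field F_q, L is a finite-dimensional field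
   extension of K (so L = F_{q^n} with n = \dim {:L}); "subspaces" are
   K-subspaces of L, i.e. elements of {vspace L}. *)

Section FlagDefs.
Variables (K : finFieldType) (L : fieldExtType K).

Definition is_subfield (U : {vspace L}) : Prop :=
  1 \in U /\ (forall x y, x \in U -> y \in U -> x * y \in U) /\
  (forall x, x \in U -> x^-1 \in U).

Definition vproper (U V : {vspace L}) : bool := (U <= V)%VS && (U != V).

Definition is_flag (F : seq {vspace L}) : Prop :=
  sorted vproper F /\ (forall U, U \in F -> vproper 0%VS U /\ vproper U fullv).

Definition flag_type (F : seq {vspace L}) : seq nat := [seq \dim U | U <- F].

Definition dS (U V : {vspace L}) : nat := (\dim (U + V) - \dim (U :&: V))%N.
Definition df (F G : seq {vspace L}) : nat :=
  (\sum_(p <- zip F G) dS p.1 p.2)%N.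

Definition flag_mul (F : seq {vspace L}) (x : L) : seq {vspace L} :=
  [seq (U * <[x]>)%VS | U <- F].

Definition Orb (alpha : L) (F : seq {vspace L}) : seq {vspace L} -> Prop :=
  fun G => exists j : nat, G = flag_mul F (alpha ^+ j).

Definition code_card (C : seq {vspace L} -> Prop) (N : nat) : Prop :=
  exists s : seq (seq {vspace L}), [/\ uniq s, size s = N & forall G, G \in s <-> C G].

Definition min_dist (C : seq {vspace L} -> Prop) (d : nat) : Prop :=
  (exists F G, [/\ C F, C G, F <> G & df F G = d]) /\
  (forall F G, C F -> C G -> F <> G -> (d <= df F G)%N).

Definition optimum_distance_code (n : nat) (t : seq nat)
    (C : seq {vspace L} -> Prop) : Prop :=
  (forall F, C F -> is_flag F /\ flag_type F = t) /\
  min_dist C (2 * (\sum_(ti <- t) (if (ti <= n./2)%N then ti else n - ti)))%N.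

Definition gen_galois_flag (F : seq {vspace L}) : Prop :=
  is_flag F /\
  (exists2 U, U \in F & is_subfield U) /\
  (exists2 U, U \in F & ~ is_subfield U) /\
  (forall i j, (i < j < size F)%N -> is_subfield (nth 0%VS F i) ->
     is_subfield (nth 0%VS F j) -> (nth 0%VS F i <= nth 0%VS F j)%VS).

Definition best_friend (F : seq {vspace L}) (E : {vspace L}) : Prop :=
  is_subfield E /\ (forall U, U \in F -> (E * U <= U)%VS) /\
  (forall E', is_subfield E' -> (forall U, U \in F -> (E' * U <= U)%VS) ->
     (E' <= E)%VS).

Definition primitive_elt (alpha : L) : Prop :=
  forall x : L, x != 0 -> exists k : nat, x = alpha ^+ k.

Definition Fsub (E : {vspace L}) (alpha : L) (l t : nat) : {vspace L} :=
  (\sum_(j < t) E * <[alpha ^+ (l * j)]>)%VS.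

Definition the_flag (E : {vspace L}) (alpha : L) (l : nat) (ss : seq nat) :=
  [seq Fsub E alpha l si | si <- ss].

End FlagDefs.

(* Main.v *)
Require Import Defs.
From HB Require Import structures.
From mathcomp Require Import all_boot all_order all_algebra all_field.
From mathcomp Require Import zify.
Import GRing.Theory.
Local Open Scope ring_scope.

Lemma dvd_sub1 (a s : nat) : (a - 1 %| a ^ s - 1)%N.
Proof.
case: a => [|a].
  rewrite sub0n dvd0n. case: s => [|s]. by []. by rewrite exp0n.
elim: s => [|s IH]; first by rewrite expn0 subnn dvdn0.
have e : (a.+1 ^ s.+1 - 1 = a.+1 * (a.+1 ^ s - 1) + (a.+1 - 1))%N.
  rewrite expnS; have : (0 < a.+1 ^ s)%N by rewrite expn_gt0.
  set X := (a.+1 ^ s)%N; nia.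
by rewrite e dvdn_add // dvdn_mull.
Qed.

Section Helpers.
Variables (K : finFieldType) (L : fieldExtType K).
Implicit Types (U V W : {vspace L}) (x y : L).

Lemma cardL : #|finvect_type L| = (#|K| ^ \dim {:L})%N.
Proof.
rewrite -(card_vspacef (Vector.class (finvect_type L))).
by rewrite (card_vspace (fullv : {vspace finvect_type L})).
Qed.

Lemma vproperE U V : vproper U V = (U <= V)%VS && (\dim U < \dim V)%N.
Proof.
rewrite /vproper; case sUV: (U <= V)%VS => //=.
by rewrite (ltn_leqif (dimv_leqif_eq sUV)).
Qed.

Lemma prodv_lineM U x y : (U * <[x * y]> = U * <[x]> * <[y]>)%VS.
Proof. by rewrite -prodv_line prodvA. Qed.

Lemma dS_mul U V y : y != 0 -> dS (U * <[y]>) (V * <[y]>) = dS U V.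
Proof.
move=> nz; rewrite /dS -prodvDl.
have h1 := dimv_sum_cap U V.
have h2 := dimv_sum_cap (U * <[y]>) (V * <[y]>).
rewrite -prodvDl !dim_cosetv // in h2.
have -> : \dim (U * <[y]> :&: V * <[y]>) = \dim (U :&: V).
  by apply/eqP; rewrite -(eqn_add2l (\dim (U + V))) h2 h1.
by rewrite dim_cosetv.
Qed.

Lemma dS_id U : dS U U = 0%N.
Proof. by rewrite /dS addvv capvv subnn. Qed.

Lemma stab_mul (E : {subfield L}) U x :
  (E * U <= U)%VS -> x \in E -> x != 0 -> (U * <[x]>)%VS = U.
Proof.
move=> sEU Ex nz; apply/eqP; rewrite eqEdim dim_cosetv // leqnn andbT.
apply: subv_trans sEU; rewrite prodvC; apply: prodvSl; by rewrite -memvE.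
Qed.

Lemma flag_mulM G x y : flag_mul (flag_mul G x) y = flag_mul G (x * y).
Proof.
by rewrite /flag_mul -map_comp; apply: eq_map => U /=; rewrite prodv_lineM.
Qed.

Lemma flag_mul_stab (E : {subfield L}) G x :
  (forall U, U \in G -> (E * U <= U)%VS) -> x \in E -> x != 0 ->
  flag_mul G x = G.
Proof.
move=> h Ex nz; rewrite /flag_mul -[RHS]map_id; apply/eq_in_map => U UG.
exact: stab_mul (h U UG) Ex nz.
Qed.

End Helpers.

Section FF.
Variables (K : finFieldType) (L : fieldExtType K).
Local Notation q := #|K|.

Lemma q_gt1 : (1 < q)%N. Proof. exact: finNzRing_gt1. Qed.

Lemma alpha_ord (alpha : L) (n : nat) : (0 < n)%N -> \dim {:L} = n ->
  primitive_elt alpha -> alpha != 0 ->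
  forall k, (alpha ^+ k == 1) = (q ^ n - 1 %| k)%N.
Proof.
move=> n0 dimL prim nz k.
have qn1 : (1 < q ^ n)%N by rewrite -{1}(expn0 q) ltn_exp2l ?q_gt1.
set Q := (q ^ n - 1)%N.
have Q0 : (0 < Q)%N by rewrite subn_gt0.
have aQ : alpha ^+ Q = 1.
  have F := Fermat's_little_theorem {:L}%AS alpha.
  rewrite memvf /= in F. 
  move/esym/eqP: F.
  have -> : (q ^ \dim {:L}%AS = Q.+1)%N by rewrite /= dimL /Q subn1 prednK // ltnW.
  by move=> h; apply: (mulIf nz); rewrite /= mul1r -exprSr.
apply/eqP/idP => [ak | /dvdnP [c ->]]; last by rewrite mulnC exprM aQ expr1n.
set r := (k %% Q)%N.
have ar : alpha ^+ r = 1.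
  move: ak; rewrite {1}(divn_eq k Q) exprD mulnC exprM aQ expr1n mul1r //.
case: (posnP r) => [r0 | r0]; first by apply/eqP.
have : (Q <= r)%N.
  have cardnz : #|predC1 (0 : finvect_type L)| = Q by rewrite cardC1 cardL dimL /Q subn1.
  pose f := fun i : 'I_r => alpha ^+ i.
  rewrite -cardnz; apply: (@leq_trans (size (codom f))); last by rewrite size_codom card_ord.
  apply: leq_trans (card_size (codom f : seq (finvect_type L))).
  apply: subset_leq_card; apply/subsetP => x /= xnz.
  have [j ->] := prim x xnz.
  apply/codomP; exists (Ordinal (ltn_pmod j r0)) => /=.
  by rewrite {1}(divn_eq j r) exprD mulnC exprM ar expr1n mul1r.
by rewrite leqNgt ltn_pmod.
Qed.

Lemma alpha_inE (E : {subfield L}) (alpha : L) (n m : nat) : (0 < n)%N -> \dim {:L} = n ->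
  \dim E = m -> (m %| n)%N -> primitive_elt alpha -> alpha != 0 ->
  forall j, (alpha ^+ j \in E) = ((q ^ n - 1) %/ (q ^ m - 1) %| j)%N.
Proof.
move=> n0 dimL dimE mn prim nz j.
have m0 : (0 < m)%N by rewrite -dimE adim_gt0.
have qm : (0 < q ^ m - 1)%N by rewrite subn_gt0 -{1}(expn0 q) ltn_exp2l ?q_gt1.
have dv : (q ^ m - 1 %| q ^ n - 1)%N.
  by case/dvdnP: mn => s ->; rewrite mulnC expnM dvd_sub1.
rewrite Fermat's_little_theorem /= dimE -exprM.
have -> : (j * q ^ m = j * (q ^ m - 1) + j)%N.
  by rewrite mulnBr muln1 subnK // leq_pmulr // expn_gt0 ltnW // q_gt1.
rewrite exprD -{2}(mul1r (alpha ^+ j)) (inj_eq (mulIf (expf_neq0 j nz))).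
by rewrite (@alpha_ord alpha n n0 dimL prim nz) -{1}(divnK dv) dvdn_pmul2r.
Qed.

End FF.

Section FsubLemmas.
Variables (K : finFieldType) (L : fieldExtType K) (E : {subfield L}) (alpha : L) (l : nat).
Local Notation beta := (alpha ^+ l).

Lemma FsubE t : Fsub E alpha l t = (\sum_(j < t) E * <[beta ^+ j]>)%VS.
Proof. by apply: eq_bigr => j _; rewrite exprM. Qed.

Lemma Fsub_mono t1 t2 : (t1 <= t2)%N -> (Fsub E alpha l t1 <= Fsub E alpha l t2)%VS.
Proof.
move=> le; rewrite !FsubE; apply/subv_sumP => j _.
by apply: (sumv_sup (widen_ord le j)).
Qed.

Lemma Fsub_stab t : (E * Fsub E alpha l t <= Fsub E alpha l t)%VS.
Proof.
rewrite FsubE big_distrr /=; apply/subv_sumP => j _.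
by rewrite prodvA prodv_id; apply: (sumv_sup j).
Qed.

Lemma Fsub1 : Fsub E alpha l 1 = E.
Proof. by rewrite FsubE big_ord1 expr0 prodv1. Qed.

Lemma Fsub_dim s t : adjoin_degree E beta = s -> beta != 0 -> (t <= s)%N ->
  \dim (Fsub E alpha l t) = (\dim E * t)%N.
Proof.
move=> ds nzb le.
have dimc j : \dim (E * <[beta ^+ j]>) = \dim E by rewrite dim_cosetv // expf_neq0.
have up : (\dim (Fsub E alpha l t) <= \dim E * t)%N.
  rewrite FsubE; apply: leq_trans (dimv_leq_sum _ _ _) _.
  rewrite (eq_bigr (fun _ => \dim E)) => [|j _]; last exact: dimc.
  by rewrite big_const_ord iter_addn_0.
have full : \dim (\sum_(j < s) E * <[beta ^+ j]>)%VS = (s * \dim E)%N.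
  by rewrite -ds -dim_Fadjoin Fadjoin_eq_sum.
have rest : (\dim (\sum_(t <= j < s) E * <[beta ^+ j]>)%VS <= (s - t) * \dim E)%N.
  apply: leq_trans (dimv_leq_sum _ _ _) _.
  rewrite (eq_bigr (fun _ => \dim E)) => [|j _]; last exact: dimc.
  by rewrite sum_nat_const_nat.
have split : (\sum_(j < s) E * <[beta ^+ j]>)%VS =
   (Fsub E alpha l t + \sum_(t <= j < s) E * <[beta ^+ j]>)%VS.
  by rewrite FsubE -!(big_mkord xpredT (fun j => E * <[beta ^+ j]>)%VS) (big_cat_nat (leq0n t) le).
have := (dimv_add_leqif (Fsub E alpha l t) (\sum_(t <= j < s) E * <[beta ^+ j]>)%VS).1.
rewrite -split full.
move: up rest; rewrite mulnBl.
set a := \dim (Fsub _ _ _ _); set b := \dim (\sum_(t <= j < s) _)%VS; set c := \dim E.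
move=> up rest h.
apply/eqP; rewrite eqn_leq up /=.
have : (s * c <= a + (s * c - t * c))%N by apply: leq_trans h _; rewrite leq_add2l.
have : (t * c <= s * c)%N by rewrite leq_mul2r le orbT.
lia.
Qed.

End FsubLemmas.

Section Dist.
Variables (K : finFieldType) (L : fieldExtType K).

Lemma df_refl (G : seq {vspace L}) : df G G = 0%N.
Proof.
elim: G => [|U G IH]; first by rewrite /df big_nil.
rewrite /df /= big_cons /= dS_id add0n; exact: IH.
Qed.

Lemma stab_sub (E : {subfield L}) (U : {vspace L}) x :
  (E * U <= U)%VS -> (U * <[x]>)%VS = U -> (<<E; x>> * U <= U)%VS.
Proof.
move=> sEU hx.
have hk k : (U * <[x ^+ k]>)%VS = U.
  elim: k => [|k IH]; first by rewrite expr0 prodv1.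
  by rewrite exprSr prodv_lineM IH hx.
rewrite Fadjoin_eq_sum /Fadjoin_sum big_distrl /=; apply/subv_sumP => i _.
by rewrite prodvAC -{2}(hk i) prodvSl.
Qed.

Lemma cap_coset0 (E : {subfield L}) x : x \notin E -> (E :&: E * <[x]>)%VS = 0%VS.
Proof.
move=> xE; apply/eqP; rewrite -subv0; apply/subvP => z.
rewrite memv_cap => /andP[zE /memv_cosetP[e eE ze]]; rewrite memv0.
apply/negPn/negP => nz.
have e0 : e != 0 by apply: contra nz => /eqP e0; rewrite ze e0 mul0r.
move/negP: xE; apply; have -> : x = e^-1 * z by rewrite ze mulrA mulVf // mul1r.
by rewrite rpredM // rpredV.
Qed.

Lemma dS_E (E : {subfield L}) x : x \notin E -> x != 0 ->
  dS E (E * <[x]>) = (2 * \dim E)%N.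
Proof.
move=> xE nz.
by rewrite /dS cap_coset0 // dimv0 subn0 dimv_disjoint_sum ?cap_coset0 // dim_cosetv // addnn -mul2n.
Qed.

Lemma dS_big (E : {subfield L}) (U : {vspace L}) x (s : nat) :
  (E * U <= U)%VS -> x \notin E -> x != 0 -> \dim {:L} = (\dim E * s)%N ->
  \dim U = (\dim E * (s - 1))%N -> (2 <= s)%N ->
  dS U (U * <[x]>) = (2 * \dim E)%N.
Proof.
move=> sEU xE nz dL dU s2.
have m0 : (0 < \dim E)%N by apply: adim_gt0.
move: dL dU; set m := \dim E => dL dU.
have ne : (U * <[x]>)%VS != U.
  apply/negP => /eqP hx.
  have h1 := field_module_dimS (stab_sub E U x sEU hx).
  have h2 := @field_dimS _ _ <<E; x>>%AS {:L}%AS (subvf _).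
  rewrite /= dim_Fadjoin dU -/m in h1. rewrite /= dim_Fadjoin dL -/m in h2.
  rewrite (mulnC m) (dvdn_pmul2r m0) in h1.
  rewrite (mulnC m) (dvdn_pmul2r m0) in h2.
  have := dvdn_sub h2 h1.
  rewrite subKn; last exact: leq_trans _ s2.
  rewrite dvdn1 adjoin_deg_eq1 => xE'.
  by rewrite xE' in xE.
set C := (U :&: U * <[x]>)%VS.
have sEC : (E * C <= C)%VS.
  rewrite subv_cap; apply/andP; split.
    exact: subv_trans (prodvSr _ (capvSl _ _)) sEU.
  apply: subv_trans (prodvSr _ (capvSr _ _)) _.
  by rewrite prodvA prodvSl.
have dC := field_module_dimS sEC; rewrite -/m in dC.
have ltC : (\dim C < \dim U)%N.
  rewrite ltn_neqAle dimvS ?capvSl // andbT.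
  apply: contra ne => /eqP e.
  have CU : C = U by apply/eqP; rewrite eqEdim capvSl e leqnn.
  have : (U <= U * <[x]>)%VS by rewrite -{1}CU capvSr.
  by move=> sU; rewrite eq_sym eqEdim sU dim_cosetv // leqnn.
case/dvdnP: dC => c dCc.
have ltc : (c < s - 1)%N.
  by rewrite -(ltn_pmul2r m0) -dCc (mulnC (s - 1)%N m) -dU.
have key : (c * m + m <= (s - 1) * m)%N by rewrite -mulSnr leq_mul2r ltc orbT.
have hsum := dimv_sum_cap U (U * <[x]>).
rewrite (dim_cosetv _ nz) -/C dCc dU (mulnC m (s - 1)%N) in hsum.
have hle : (\dim (U + U * <[x]>) <= \dim {:L})%N := dimvS (subvf _).
have ms : (m * s = (s - 1) * m + m)%N.
  by rewrite -mulSnr subn1 prednK ?(mulnC m) // (leq_trans _ s2).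
rewrite dL ms in hle.
rewrite /dS -/C dCc.
move: hsum hle key; move: (\dim (U + U * <[x]>)) => A.
move: (c * m)%N => P; move: ((s - 1) * m)%N => Q;
lia.
Qed.

End Dist.

Lemma arith1 (n m : nat) : (3 * m <= n)%N -> (m <= n./2)%N.
Proof. lia. Qed.
Lemma arith2 (n m : nat) : (3 * m <= n)%N -> (0 < m)%N -> (n./2 < n - m)%N.
Proof. lia. Qed.
Lemma arith3 (n m : nat) : (3 * m <= n)%N -> (0 < m)%N -> (m < n)%N.
Proof. lia. Qed.

Theorem mainTheorem7 (K : finFieldType) (L : fieldExtType K)
    (n m : nat) (E : {subfield L}) (alpha : L) (l : nat) (ss : seq nat) :
    \dim {:L} = n -> \dim E = m -> (m %| n)%N ->
    primitive_elt alpha ->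
    (1 <= l)%N -> (l < (#|K| ^ n - 1) %/ (#|K| ^ m - 1))%N ->
    (2 <= size ss)%N -> sorted ltn ss -> (1 <= head 0%N ss)%N ->
    (last 0%N ss < n %/ m)%N ->
    (* L = s : the minimal polynomial of alpha^l over F_{q^m} has degree n/m *)
    (size (minPoly E (alpha ^+ l))).-1 = (n %/ m)%N ->
    (gen_galois_flag (the_flag E alpha l ss) <-> head 0%N ss = 1%N) /\
    (size ss = 2%N -> head 0%N ss = 1%N ->
       last 0%N ss = ((size (minPoly E (alpha ^+ l))).-1).-1 ->
       let F := the_flag E alpha l ss in
       gen_galois_flag F /\
       optimum_distance_code n [:: m; (n - m)%N] (Orb alpha F) /\
       min_dist (Orb alpha F) (4 * m)%N /\
       code_card (Orb alpha F) ((#|K| ^ n - 1) %/ (#|K| ^ m - 1))%N /\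
       best_friend F E /\
       (forall G N, is_flag G -> best_friend G E -> code_card (Orb alpha G) N ->
             (N <= (#|K| ^ n - 1) %/ (#|K| ^ m - 1))%N)).
Proof.
move=> dL dE mn prim l1 lN ss2 srt h1 lastS degS.
have m0 : (0 < m)%N by rewrite -dE adim_gt0.
have ds : adjoin_degree E (alpha ^+ l) = (n %/ m)%N by rewrite -degS size_minPoly.
rewrite degS. move: lastS ds; set s := (n %/ m)%N => lastS ds.
have nsm : n = (s * m)%N by rewrite /s divnK.
have sl : sorted leq ss := sub_sorted (fun a b => @ltnW a b) srt.
have memss t : t \in ss -> (head 0%N ss <= t /\ t <= last 0%N ss)%N.
  move=> tss; have ilt : (index t ss < size ss)%N by rewrite index_mem.
  have sz0 : (0 < size ss)%N := leq_ltn_trans (leq0n _) ilt.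
  rewrite -(nth_index 0%N tss) -nth0 -nth_last; split.
    by apply: (sorted_leq_nth leq_trans leqnn) => //; rewrite inE.
  apply: (sorted_leq_nth leq_trans leqnn) => //; rewrite ?inE ?prednK //.
  by rewrite -ltnS prednK.
have bnd t : t \in ss -> (1 <= t < s)%N.
  move=> /memss [a b]; rewrite (leq_trans h1 a) /=; exact: leq_ltn_trans b lastS.
have [a [b [r Ess]]] : exists a b r, ss = [:: a, b & r].
  by case: (ss) ss2 => [|x [|y r]] //; exists x, y, r.
have ab : (a < b)%N by move: srt; rewrite Ess /= => /andP[].
have hda : head 0%N ss = a by rewrite Ess.
have ass : a \in ss by rewrite Ess mem_head.
have bss : b \in ss by rewrite Ess !inE eqxx orbT.
have s3 : (3 <= s)%N.
  have /andP[_ bs] := bnd b bss.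
  by apply: leq_trans bs; rewrite ltnS; apply: leq_ltn_trans ab; rewrite -hda.
have s0 : (0 < s)%N by apply: leq_trans s3.
have nzb : alpha ^+ l != 0.
  have : alpha ^+ l \notin E by rewrite -adjoin_deg_eq1 ds; case: (s) s3 => [|[|]].
  by apply: contra => /eqP ->; exact: mem0v.
have nza : alpha != 0.
  by apply: contra nzb => /eqP ->; rewrite expr0n; case: (l) l1.
have n0 : (0 < n)%N by rewrite nsm muln_gt0 s0 m0.
have dimF t : (t <= s)%N -> \dim (Fsub E alpha l t) = (m * t)%N.
  by move=> ts; rewrite -dE; apply: Fsub_dim ds nzb ts.
have subE : is_subfield E.
  split; first exact: mem1v.
  by split=> [x y xE yE | x xE]; [rewrite rpredM | rewrite rpredV].
have notsub t : (2 <= t)%N -> (t < s)%N -> ~ is_subfield (Fsub E alpha l t).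
  move=> t2 ts [one [mul _]].
  have EU : (E <= Fsub E alpha l t)%VS by rewrite -{1}(@Fsub1 _ _ E alpha l); apply: Fsub_mono; apply: ltnW.
  have bU : alpha ^+ l \in Fsub E alpha l t.
    have : (E * <[(alpha ^+ l) ^+ (Ordinal t2)]> <= Fsub E alpha l t)%VS.
      by rewrite FsubE; apply: (sumv_sup (Ordinal t2)).
    move/subvP; apply; rewrite /= expr1 -[X in X \in _](mul1r (alpha ^+ l)).
    by apply: memv_mul; [exact: mem1v | exact: memv_line].
  have pU j : (alpha ^+ l) ^+ j \in Fsub E alpha l t.
    elim: j => [|j IH]; first by rewrite expr0.
    by rewrite exprS mul.
  have : (Fsub E alpha l s <= Fsub E alpha l t)%VS.
    rewrite [Fsub _ _ _ s]FsubE; apply/subv_sumP => j _.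
    apply/subvP => y /memv_cosetP [e eE ->].
    by apply: mul; [exact: (subvP EU) | exact: pU].
  move/dimvS; rewrite (dimF s (leqnn s)) (dimF t (ltnW ts)) leq_mul2l.
  by rewrite eqn0Ngt m0 /= leqNgt ts.
have Fmono := @Fsub_mono _ _ E alpha l.
have Fstab := @Fsub_stab _ _ E alpha l.
have vpF t1 t2 : (t1 < t2)%N -> (t2 <= s)%N ->
    vproper (Fsub E alpha l t1) (Fsub E alpha l t2).
  move=> lt le; rewrite vproperE (Fmono _ _ (ltnW lt)) /=.
  by rewrite (dimF t1 (ltnW (leq_trans lt le))) (dimF t2 le) ltn_pmul2l.
have isF : is_flag (the_flag E alpha l ss).
  split.
    rewrite /the_flag sorted_map.
    apply: (@sub_in_sorted _ (mem ss)) _ _ (allss ss) srt.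
    move=> x y xs ys /= xy; apply: vpF xy _.
    by have /andP[_ /ltnW] := bnd y ys.
  move=> U /mapP [t ts ->]; have /andP[t1 t2] := bnd t ts.
  rewrite !vproperE sub0v subvf dimv0 (dimF t (ltnW t2)) dL nsm /=.
  by rewrite muln_gt0 m0 t1 /= (mulnC m t) ltn_pmul2r.
have chain i j : (i < j < size (the_flag E alpha l ss))%N ->
    (nth 0%VS (the_flag E alpha l ss) i <= nth 0%VS (the_flag E alpha l ss) j)%VS.
  move=> /andP[ij jsz]; rewrite size_map in jsz.
  have isz : (i < size ss)%N by apply: ltn_trans ij jsz.
  rewrite (nth_map 0%N) // (nth_map 0%N) //.
  apply: Fmono; apply: (sorted_leq_nth leq_trans leqnn) => //; exact: ltnW.
have part1 : gen_galois_flag (the_flag E alpha l ss) <-> head 0%N ss = 1%N.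
  rewrite hda; split.
    case=> _ [[U /mapP [t ts ->] Us] _].
    have /andP[t1 tlt] := bnd t ts.
    have t_1 : t = 1%N.
      apply/eqP; rewrite eqn_leq t1 andbT leqNgt; apply/negP => t2.
      exact: (notsub t t2 tlt Us).
    have [ha _] := memss t ts; rewrite hda t_1 in ha.
    by apply/eqP; rewrite eqn_leq ha /= -hda h1.
  move=> a1; split; first exact: isF.
  split; [|split].
  - exists (Fsub E alpha l a); first by apply: map_f.
    by rewrite a1 Fsub1.
  - exists (Fsub E alpha l b); first by apply: map_f.
    apply: notsub; first by rewrite -a1.
    by have /andP[] := bnd b bss.
  - move=> i j ij _ _; exact: chain.
split; first exact: part1.
move=> sz2 hd1 lst F.
have GF : gen_galois_flag F by apply/part1.
have rnil : r = [::] by move: sz2; rewrite Ess; case: (r).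
have a1 : a = 1%N by rewrite -hda.
have bs : b = s.-1 by move: lst; rewrite Ess rnil.
have FE : F = [:: (E : {vspace L}); Fsub E alpha l s.-1].
  by rewrite /F /the_flag Ess rnil a1 bs /= Fsub1.
move: FE; set D := Fsub E alpha l s.-1 => FE.
have s1 : (2 <= s.-1)%N by case: (s) s3 => [|[|[|k]]].
have ED : (E <= Fsub E alpha l s.-1)%VS.
  by rewrite -{1}(@Fsub1 _ _ E alpha l); apply: Fmono; apply: ltnW.
have ps : (s.-1 < s)%N by rewrite prednK.
have dD : \dim D = (m * s.-1)%N by apply: dimF; apply: leq_pred.
have stabF U : U \in F -> (E * U <= U)%VS.
  by rewrite FE !inE => /orP[/eqP->|/eqP->]; [rewrite prodv_id | exact: Fstab].
set N := ((#|K| ^ n - 1) %/ (#|K| ^ m - 1))%N in lN *.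
have ainE j : (alpha ^+ j \in E) = (N %| j)%N := @alpha_inE _ _ E alpha n m n0 dL dE mn prim nza j.
have N1 : (1 < N)%N by apply: leq_ltn_trans l1 lN.
have N0 : (0 < N)%N by apply: ltnW.
have xmul G x y : (forall U, U \in G -> (E * U <= U)%VS) -> x \in E -> x != 0 ->
    flag_mul G (x * y) = flag_mul G y.
  by move=> hG xE nzx; rewrite -flag_mulM (@flag_mul_stab _ _ E G x hG xE nzx).
have modG G k : (forall U, U \in G -> (E * U <= U)%VS) ->
    flag_mul G (alpha ^+ k) = flag_mul G (alpha ^+ (k %% N)).
  move=> hG; rewrite {1}(divn_eq k N) exprD xmul //; last exact: expf_neq0.
  by rewrite ainE dvdn_mull.
have dLs : \dim {:L} = (\dim E * s)%N by rewrite dL nsm dE mulnC.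
have dDs : \dim D = (\dim E * (s - 1))%N by rewrite dD dE subn1.
have s2 : (2 <= s)%N by apply: ltnW.
have dist y x : y != 0 -> x != 0 -> x \notin E ->
    df (flag_mul F y) (flag_mul F (x * y)) = (4 * m)%N.
  move=> nzy nzx xE; rewrite -flag_mulM FE /flag_mul /df /= big_cons big_cons big_nil /= addn0.
  rewrite !(@dS_mul _ _ _ _ _ nzy) (@dS_E _ _ E x xE nzx).
  rewrite (@dS_big _ _ E D x s (Fstab _) xE nzx dLs dDs s2).
  by rewrite dE -mulnDl.
have pair i j : flag_mul F (alpha ^+ i) <> flag_mul F (alpha ^+ j) ->
    df (flag_mul F (alpha ^+ i)) (flag_mul F (alpha ^+ j)) = (4 * m)%N.
  have nzi : alpha ^+ i != 0 by apply: expf_neq0.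
  have nzj : alpha ^+ j != 0 by apply: expf_neq0.
  rewrite -[alpha ^+ j](divfK nzi) => ne.
  have nzx : alpha ^+ j / alpha ^+ i != 0 by rewrite mulf_neq0 ?invr_neq0.
  case: (boolP (alpha ^+ j / alpha ^+ i \in E)) => xE.
    by exfalso; apply: ne; rewrite xmul.
  exact: dist.
have aE : alpha \notin E.
  apply/negP; rewrite -{1}(expr1 alpha) ainE dvdn1 => /eqP N1'.
  by rewrite N1' in N1.
have md : min_dist (Orb alpha F) (4 * m).
  split.
    have e4 : df (flag_mul F (alpha ^+ 0)) (flag_mul F (alpha ^+ 1)) = (4 * m)%N.
      have -> : alpha ^+ 1 = alpha * alpha ^+ 0 by rewrite expr0 mulr1 expr1.
      by apply: dist => //; rewrite expr0 oner_neq0.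
    exists (flag_mul F (alpha ^+ 0)), (flag_mul F (alpha ^+ 1)); split => //.
    - by exists 0%N.
    - by exists 1%N.
    - move=> eq; move: e4; rewrite eq df_refl => /esym/eqP.
      by rewrite muln_eq0 /= eqn0Ngt m0.
  by move=> G G' [i ->] [j ->] ne; rewrite (pair i j ne).
have nm : (n - m = m * s.-1)%N.
  by rewrite nsm -{2}(mul1n m) -mulnBl subn1 mulnC.
have h3 : (3 * m <= n)%N by rewrite nsm leq_mul2r s3 orbT.
have opt : optimum_distance_code n [:: m; (n - m)%N] (Orb alpha F).
  split.
    move=> G [j ->]; have nzy : alpha ^+ j != 0 by apply: expf_neq0.
    rewrite FE /flag_mul /flag_type /=.
    split; [split|].
    - rewrite /= andbT vproperE prodvSl // !dim_cosetv // dE dD.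
      by rewrite -{1}(muln1 m) ltn_pmul2l.
    - move=> U; rewrite !inE => /orP[]/eqP->; rewrite !vproperE sub0v subvf dimv0 dim_cosetv //=.
        by rewrite dE dL m0; split => //; apply: arith3.
      rewrite dD dL muln_gt0 m0 /= -nm; split; first exact: leq_trans _ s1.
      by rewrite ltn_subrL m0 n0.
    - by rewrite !dim_cosetv // dE dD nm.
  rewrite big_cons big_cons big_nil.
  have c1 : (m <= n./2)%N by apply: arith1.
  have c2 : (n - m <= n./2)%N = false by apply/negbTE; rewrite -ltnNge; apply: arith2.
  rewrite c1 c2 addn0 subKn; last by apply: ltnW; apply: arith3.
  by rewrite addnn -mul2n mulnA.
have cc : code_card (Orb alpha F) N.
  exists [seq flag_mul F (alpha ^+ j) | j <- iota 0 N]; split.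
  - rewrite map_inj_in_uniq ?iota_uniq // => i j.
    rewrite !mem_iota !add0n => /andP[_ iN] /andP[_ jN].
    have key i' j' : (i' < N)%N -> (j' < N)%N -> (i' <= j')%N ->
        flag_mul F (alpha ^+ i') = flag_mul F (alpha ^+ j') -> i' = j'.
      move=> i'N j'N ij eq; apply/eqP; rewrite eqn_leq ij /= -subn_eq0; case: (posnP (j' - i')%N) => [// | nz].
      have ex : alpha ^+ j' = alpha ^+ (j' - i') * alpha ^+ i' by rewrite -exprD subnK.
      case: (boolP (alpha ^+ (j' - i') \in E)) => xE.
        rewrite ainE in xE; exfalso.
        have := dvdn_leq nz xE; rewrite leqNgt => /negP; apply.
        by apply: leq_ltn_trans j'N; apply: leq_subr.
      have := dist (alpha ^+ i') (alpha ^+ (j' - i')) (expf_neq0 _ nza) (expf_neq0 _ nza) xE.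
      rewrite -ex -eq df_refl => /esym/eqP; by rewrite muln_eq0 /= eqn0Ngt m0.
    case/orP: (leq_total i j) => h eq; first exact: key.
    by apply/esym; apply: key => //; apply/esym.
  - by rewrite size_map size_iota.
  - move=> G; split; first by case/mapP => j _ ->; exists j.
    case=> k ->; rewrite modG //; apply: map_f.
    by rewrite mem_iota add0n ltn_pmod.
have bf : best_friend F E.
  split; first exact: subE.
  split; first exact: stabF.
  move=> E' _ hE'.
  have EF : (E : {vspace L}) \in F by rewrite FE mem_head.
  have h := hE' _ EF.
  apply/subvP => z zE'; rewrite -[z]mulr1; apply: (subvP h).
  exact: memv_mul zE' (mem1v E).
split; first exact: GF.
split; first exact: opt.
split; first exact: md.
split; first exact: cc.
split; first exact: bf.
move=> G N' _ [_ [hG _]] [sq [u0 sz0 ms0]].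
rewrite -sz0 -(size_iota 0 N) -(size_map (fun j => flag_mul G (alpha ^+ j))).
apply: uniq_leq_size u0 _ => H /ms0 [k ->].
rewrite modG //; apply: map_f.
by rewrite mem_iota add0n ltn_pmod.
Qed.
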